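(* Let $G$ be a finite group and $p$ a prime dividing $|G|$. If $\mathcal{O}_p(G)\neq1$, then the finite spaces $\mathcal{S}_p(G)'/G$ and $\mathcal{B}_p(G)'/G$ are contractible.
   Context: $\mathcal{O}_p(G)$ is the largest normal $p$-subgroup of $G$. $\mathcal{S}_p(G)$ is the poset of non-trivial $p$-subgroups of $G$; $\mathcal{B}_p(G)=\{P\in\mathcal{S}_p(G):P=\mathcal{O}_p(N_G(P))\}$. $G$ acts by conjugation. For a poset $X$, $X'$ is the poset of non-empty chains ordered by inclusion with componentwise $G$-action, and $X'/G$ is the orbit poset ($\overline{c}\le\overline{d}$ iff some representatives satisfy $c_1\subseteq d_1$). Finite posets are finite $T_0$ spaces whose open sets are the down-sets. *)

(* Defs.v *)
From Stdlib Require Import Rdefinitions Rbasic_fun.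
From mathcomp Require Import all_boot all_fingroup all_solvable.

Set Implicit Arguments.
Unset Strict Implicit.
Unset Printing Implicit Defensive.

Local Open Scope group_scope.

(* A finite poset is given by a carrier X : {set T} (T a finType) and an
   order relation le.  Its open sets are the down-sets of X. *)

Definition unit_interval (t : R) : Prop := Rle Rdefinitions.R0 t /\ Rle t Rdefinitions.R1.

Definition down_open (T : finType) (le : rel T) (X U : {set T}) : Prop :=
  U \subset X /\
  (forall x y, x \in U -> y \in X -> le y x -> y \in U).

(* Openness of W (restricted to X x [0,1]) in the product topology of the
   finite space X with the unit interval (subspace of the reals):
   every point has a basic open rectangle U x ((t-eps,t+eps) /\ [0,1])
   inside W, with U open in X. *)
Definition prod_open (T : finType) (le : rel T) (X : {set T})
    (W : T -> R -> Prop) : Prop :=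
  forall x t, x \in X -> unit_interval t -> W x t ->
    exists U : {set T}, down_open le X U /\ x \in U /\
      exists eps : R, Rlt Rdefinitions.R0 eps /\
        forall y s, y \in U -> unit_interval s ->
          Rlt (Rabs (Rminus s t)) eps -> W y s.

Definition homotopy_continuous (T : finType) (le : rel T) (X : {set T})
    (H : T -> R -> T) : Prop :=
  forall U : {set T}, down_open le X U ->
    prod_open le X (fun x t => H x t \in U).

Definition contractible (T : finType) (le : rel T) (X : {set T}) : Prop :=
  exists x0, x0 \in X /\
  exists H : T -> R -> T,
    (forall x t, x \in X -> unit_interval t -> H x t \in X) /\
    (forall x, x \in X -> H x Rdefinitions.R0 = x /\ H x Rdefinitions.R1 = x0) /\
    homotopy_continuous le X H.

Definition Sp (gT : finGroupType) (G : {group gT}) (p : nat) : {set {group gT}} :=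
  [set P : {group gT} | (P \subset G) && p.-group P && (P :!=: 1)].

Definition Bp (gT : finGroupType) (G : {group gT}) (p : nat) : {set {group gT}} :=
  [set P in Sp G p | P :==: 'O_p('N_G(P))].

Definition is_chain (gT : finGroupType) (S : {set {group gT}})
    (c : {set {group gT}}) : bool :=
  [&& c != set0, c \subset S &
      [forall P in c, forall Q in c, (P \subset Q) || (Q \subset P)]].

Definition chains (gT : finGroupType) (S : {set {group gT}})
    : {set {set {group gT}}} := [set c | is_chain S c].

Definition chain_conj (gT : finGroupType) (c : {set {group gT}}) (g : gT)
    : {set {group gT}} := [set (P :^ g)%G | P in c].

Definition chain_orbit (gT : finGroupType) (G : {group gT})
    (c : {set {group gT}}) : {set {set {group gT}}} :=
  [set chain_conj c g | g in G].

Definition orbit_poset (gT : finGroupType) (G : {group gT})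
    (S : {set {group gT}}) : {set {set {set {group gT}}}} :=
  [set chain_orbit G c | c in chains S].

Definition orbit_le (gT : finGroupType) : rel {set {set {group gT}}} :=
  fun O1 O2 => [exists c in O1, exists d in O2, c \subset d].

(* Main.v *)
Require Import Defs.
From Stdlib Require Import Rdefinitions Rbasic_fun.
From mathcomp Require Import all_boot all_fingroup all_solvable.

Set Implicit Arguments.
Unset Strict Implicit.
Unset Printing Implicit Defensive.
Local Open Scope group_scope.
Section Grp.
Variables (gT : finGroupType) (G : {group gT}) (p : nat).

Definition chset := {set {group gT}}.
Definition lift (F : chset -> chset) (O : {set chset}) : {set chset} := [set F c | c in O].
Definition equivF (F : chset -> chset) :=
  forall c g, g \in G -> F (chain_conj c g) = chain_conj (F c) g.
Definition monoF (F : chset -> chset) := forall c d : chset, c \subset d -> F c \subset F d.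

Lemma conjG1 (P : {group gT}) : (P :^ 1)%G = P.
Proof. by apply: val_inj; rewrite /= conjsg1. Qed.

Lemma chain_conj1 (c : chset) : chain_conj c 1 = c.
Proof.
rewrite /chain_conj (eq_imset (g := fun P => P)) ?imset_id // => P; exact: conjG1.
Qed.

Lemma orbit_mem (c : chset) : c \in chain_orbit G c.
Proof. by apply/imsetP; exists 1; rewrite ?group1 ?chain_conj1. Qed.

Lemma lift_orbit F (c : chset) : equivF F -> lift F (chain_orbit G c) = chain_orbit G (F c).
Proof.
move=> eF; rewrite /lift /chain_orbit -imset_comp; apply: eq_in_imset => g gG /=.
exact: eF.
Qed.

Lemma lift_maps S F : equivF F -> (forall c, c \in chains S -> F c \in chains S) ->
  forall O, O \in orbit_poset G S -> lift F O \in orbit_poset G S.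
Proof.
move=> eF cF O /imsetP[c cS ->]; rewrite lift_orbit //; apply: imset_f; exact: cF.
Qed.

Lemma lift_mono F : monoF F -> forall O1 O2, orbit_le O1 O2 -> orbit_le (lift F O1) (lift F O2).
Proof.
move=> mF O1 O2 /existsP[c /andP[cO /existsP[d /andP[dO cd]]]].
apply/existsP; exists (F c); rewrite imset_f //=; apply/existsP; exists (F d).
by rewrite imset_f //= mF.
Qed.

Lemma orbit_nonempty S O : O \in orbit_poset G S -> exists c, c \in O.
Proof. by move=> /imsetP[c _ ->]; exists c; apply: orbit_mem. Qed.

Lemma lift_le S (F Fp : chset -> chset) : (forall c, F c \subset Fp c) ->
  forall O, O \in orbit_poset G S -> orbit_le (lift F O) (lift Fp O).
Proof.
move=> sF O /orbit_nonempty[c cO]; apply/existsP; exists (F c); rewrite imset_f //=.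
by apply/exists_inP; exists (Fp c); rewrite ?imset_f ?sF.
Qed.

Lemma id_le S (F : chset -> chset) : (forall c : chset, c \subset F c) ->
  forall O, O \in orbit_poset G S -> orbit_le O (lift F O).
Proof.
move=> sF O /orbit_nonempty[c cO]; apply/existsP; exists c; rewrite cO /=.
by apply/exists_inP; exists (F c); rewrite ?imset_f ?sF.
Qed.

Definition fm (f : {group gT} -> {group gT}) (pr : pred {group gT}) (c : chset) : chset :=
  [set f P | P in [set Q in c | pr Q]].

Lemma fm_mono f pr : monoF (fm f pr).
Proof.
move=> c d cd; apply/subsetP=> X /imsetP[P]; rewrite inE => /andP[Pc prP] ->.
by apply: imset_f; rewrite inE prP (subsetP cd).
Qed.

Lemma fm_conj f pr (c : chset) g : (forall P, pr (P :^ g)%G = pr P) ->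
  (forall P, f (P :^ g)%G = (f P :^ g)%G) ->
  fm f pr (chain_conj c g) = chain_conj (fm f pr c) g.
Proof.
move=> hpr hf; apply/setP=> X; apply/imsetP/imsetP.
- case=> Q; rewrite inE => /andP[/imsetP[P Pc ->] prQ] ->.
  exists (f P); last exact: hf.
  by apply: imset_f; rewrite inE Pc -hpr.
- case=> Y /imsetP[P]; rewrite inE => /andP[Pc prP] -> ->.
  exists (P :^ g)%G; last by rewrite hf.
  by rewrite inE hpr prP andbT; apply: imset_f.
Qed.

Lemma fm_mem f (pr : pred {group gT}) (c : chset) P : P \in c -> pr P -> f P \in fm f pr c.
Proof. by move=> Pc prP; apply: imset_f; rewrite inE Pc. Qed.

Lemma fm_memP f (pr : pred {group gT}) (c : chset) X : X \in fm f pr c -> exists2 P, P \in c & pr P /\ X = f P.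
Proof. by move=> /imsetP[P]; rewrite inE => /andP[Pc prP] ->; exists P. Qed.

Lemma chain_conjU (A B : chset) g : chain_conj (A :|: B) g = chain_conj A g :|: chain_conj B g.
Proof. exact: imsetU. Qed.

Lemma mk_chain (S c : chset) : c != set0 -> c \subset S ->
  (forall P Q, P \in c -> Q \in c -> (P \subset Q) || (Q \subset P)) -> c \in chains S.
Proof.
move=> c0 cS cmp; rewrite inE /is_chain c0 cS /=.
by apply/forall_inP=> P Pc; apply/forall_inP=> Q Qc; apply: cmp.
Qed.

Lemma chainE (S c : chset) : c \in chains S -> [/\ c != set0, c \subset S &
  forall P Q, P \in c -> Q \in c -> (P \subset Q) || (Q \subset P)].
Proof.
rewrite inE => /and3P[c0 cS /forall_inP cmp]; split=> // P Q Pc Qc.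
by have /forall_inP := cmp P Pc; apply.
Qed.


Local Notation N := ('O_p(G))%G.

Definition joinN (P : {group gT}) : {group gT} := (P <*> N)%G.
Definition lo a : chset -> chset := fm (fun P => P) (fun Q => #|Q| <= a).
Definition hi b : chset -> chset := fm joinN (fun Q => b <= #|Q|).
Definition Gab a b (c : chset) : chset := lo a c :|: hi b c.
Definition psi (c : chset) : chset := hi 0 c :|: [set N].
Definition Kc (c : chset) : chset := [set N].
Definition Bf (c : chset) : chset := c :|: [set N].

Lemma nNG : N <| G. Proof. exact: pcore_normal. Qed.

Lemma conjN g : g \in G -> (N :^ g)%G = N.
Proof.
move=> gG; apply: val_inj => /=.
exact: (normsP (normal_norm nNG)).
Qed.

Lemma joinN_conj P g : g \in G -> joinN (P :^ g)%G = (joinN P :^ g)%G.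
Proof.
by move=> gG; apply: val_inj; rewrite /= conjYg (normsP (normal_norm nNG) g gG).
Qed.

Lemma card_conj (P : {group gT}) g : #|(P :^ g)%G| = #|P|.
Proof. exact: cardJg. Qed.

Lemma lo_equiv a : equivF (lo a).
Proof. by move=> c g gG; apply: fm_conj => P //; rewrite card_conj. Qed.

Lemma hi_equiv b : equivF (hi b).
Proof. by move=> c g gG; apply: fm_conj => P; rewrite ?card_conj ?joinN_conj. Qed.

Lemma set1N_equiv g : g \in G -> chain_conj [set N] g = [set N].
Proof. by move=> gG; rewrite /chain_conj imset_set1 conjN. Qed.

Lemma Gab_equiv a b : equivF (Gab a b).
Proof. by move=> c g gG; rewrite /Gab chain_conjU lo_equiv // hi_equiv. Qed.

Lemma psi_equiv : equivF psi.
Proof. by move=> c g gG; rewrite /psi chain_conjU hi_equiv // set1N_equiv. Qed.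

Lemma Kc_equiv : equivF Kc.
Proof. by move=> c g gG; rewrite /Kc set1N_equiv. Qed.

Lemma Bf_equiv : equivF Bf.
Proof. by move=> c g gG; rewrite /Bf chain_conjU set1N_equiv. Qed.

Lemma Gab_mono a b : monoF (Gab a b).
Proof. by move=> c d cd; rewrite /Gab setUSS // fm_mono. Qed.

Lemma psi_mono : monoF psi.
Proof. by move=> c d cd; rewrite /psi setUSS // fm_mono. Qed.

Lemma Kc_mono : monoF Kc.
Proof. by move=> c d cd. Qed.

Lemma Bf_mono : monoF Bf.
Proof. by move=> c d cd; rewrite /Bf setUSS. Qed.

Hypothesis N1 : N :!=: 1.

Lemma N_Sp : N \in Sp G p.
Proof. by rewrite inE pcore_sub pcore_pgroup N1. Qed.

Lemma joinN_Sp P : P \in Sp G p -> joinN P \in Sp G p.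
Proof.
rewrite !inE => /andP[/andP[sPG pP] _]; apply/andP; split; first apply/andP; first split.
- by rewrite join_subG sPG pcore_sub.
- rewrite /= norm_joinEl ?pgroupM ?pP ?pcore_pgroup //.
  exact: subset_trans sPG (normal_norm nNG).
- apply: contra N1 => /eqP e; rewrite -subG1 /=.
  by apply: subset_trans (joing_subr P N) _; rewrite e.
Qed.

Lemma joinN_mono (P Q : {group gT}) : P \subset Q -> joinN P \subset joinN Q.
Proof.
move=> sPQ; rewrite /= join_subG joing_subr andbT.
exact: subset_trans sPQ (joing_subl _ _).
Qed.

Lemma sub_joinN (P : {group gT}) : P \subset joinN P.
Proof. exact: joing_subl. Qed.

Lemma N_sub_joinN (P : {group gT}) : N \subset joinN P.
Proof. exact: joing_subr. Qed.

Lemma cmp_lohi (c : chset) a b P Q : c \in chains (Sp G p) -> P \in c -> Q \in c ->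
  #|P| <= a -> b <= #|Q| -> a <= b -> P \subset joinN Q.
Proof.
move=> /chainE[_ _ cmp] Pc Qc Pa bQ ab.
case/orP: (cmp P Q Pc Qc) => [sPQ|sQP].
  exact: subset_trans sPQ (sub_joinN Q).
have /eqP eQP : (Q :==: P).
  by rewrite eqEcard sQP (leq_trans Pa (leq_trans ab bQ)).
by rewrite -eQP sub_joinN.
Qed.

Lemma Gab_chain a b (c : chset) : a <= b -> b <= a.+1 -> c \in chains (Sp G p) ->
  Gab a b c \in chains (Sp G p).
Proof.
move=> ab ba cC; have [c0 cS cmp] := chainE cC.
apply: mk_chain.
- case/set0Pn: c0 => P Pc; apply/set0Pn.
  case: (leqP #|P| a) => hP.
    by exists P; rewrite inE; apply/orP; left; apply: fm_mem.
  exists (joinN P); rewrite inE; apply/orP; right.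
  by apply: fm_mem => //; apply: leq_trans ba hP.
- apply/subsetP=> X; case/setUP=> /fm_memP[P Pc [_ ->]].
    exact: (subsetP cS).
  by apply: joinN_Sp; apply: (subsetP cS).
- move=> X Y; case/setUP=> /fm_memP[P Pc [hP ->]]; case/setUP=> /fm_memP[Q Qc [hQ ->]].
  + exact: cmp.
  + by rewrite (cmp_lohi cC Pc Qc hP hQ ab).
  + by rewrite (cmp_lohi cC Qc Pc hQ hP ab) orbT.
  + by case/orP: (cmp P Q Pc Qc) => [/joinN_mono ->|/joinN_mono ->]; rewrite ?orbT.
Qed.

Lemma psi_chain (c : chset) : c \in chains (Sp G p) -> psi c \in chains (Sp G p).
Proof.
move=> cC; have [c0 cS cmp] := chainE cC.
apply: mk_chain.
- by apply/set0Pn; exists N; rewrite !inE eqxx orbT.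
- apply/subsetP=> X; case/setUP.
    by case/fm_memP=> P Pc [_ ->]; apply: joinN_Sp; apply: (subsetP cS).
  by rewrite inE => /eqP ->; apply: N_Sp.
- move=> X Y /setUP[/fm_memP[P Pc [_ ->]]|/set1P ->] /setUP[/fm_memP[Q Qc [_ ->]]|/set1P ->].
  + by case/orP: (cmp P Q Pc Qc) => [/joinN_mono ->|/joinN_mono ->]; rewrite ?orbT.
  + by rewrite N_sub_joinN orbT.
  + by rewrite N_sub_joinN.
  + by rewrite subxx.
Qed.

Lemma Kc_chain (S c : chset) : N \in S -> Kc c \in chains S.
Proof.
move=> NS; apply: mk_chain.
- by apply/set0Pn; exists N; rewrite inE.
- by rewrite sub1set.
- by move=> X Y; rewrite !inE => /eqP-> /eqP->; rewrite subxx.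
Qed.

Lemma N_Bp : N \in Bp G p.
Proof.
rewrite inE N_Sp /=.
have eG : 'N_G(N) = G by apply/setIidPl; exact: normal_norm nNG.
by rewrite eG.
Qed.

Lemma N_sub_Bp P : P \in Bp G p -> N \subset P.
Proof.
rewrite inE => /andP[]; rewrite inE => /andP[/andP[sPG pP] _] /eqP eP.
have nPN : P \subset 'N(N) := subset_trans sPG (normal_norm nNG).
set M := (P <*> N)%G.
have eM : M :=: P * N by rewrite /= norm_joinEl.
have pM : p.-group M by rewrite eM pgroupM pP pcore_pgroup.
have sNM : 'N_M(P) \subset P.
  apply/subsetP=> x /setIP[]; rewrite eM => /mulsgP[a n aP nN ->] xNP.
  have nNP : n \in 'N(P).
    have : a^-1 * (a * n) \in 'N(P) by rewrite groupM ?groupV // (subsetP (normG P)).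
    by rewrite mulKg.
  have : n \in 'O_p('N_G(P)).
    apply: (subsetP (pcore_max _ (normalGI (subsetIl G 'N(P)) nNG))).
      exact: pgroupS (subsetIr _ _) (pcore_pgroup _ _).
    by rewrite /= !in_setI nN nNP (subsetP (pcore_sub _ _) n nN).
  by rewrite -eP => nP; rewrite groupM.
have := nilpotent_sub_norm (pgroup_nil pM) (joing_subl _ _) sNM.
move=> e; have : N \subset M by exact: joing_subr.
by rewrite e.
Qed.

Lemma Bf_chain (c : chset) : c \in chains (Bp G p) -> Bf c \in chains (Bp G p).
Proof.
move=> cC; have [c0 cS cmp] := chainE cC.
apply: mk_chain.
- by apply/set0Pn; exists N; rewrite !inE eqxx orbT.
- by rewrite /Bf subUset cS sub1set N_Bp.
- move=> X Y /setUP[Xc|/set1P ->] /setUP[Yc|/set1P ->].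
  + exact: cmp.
  + by rewrite N_sub_Bp ?orbT // (subsetP cS).
  + by rewrite N_sub_Bp // (subsetP cS).
  + by rewrite subxx.
Qed.

End Grp.

Lemma fm_subpr (gT : finGroupType) f (pr pr' : pred {group gT}) (c : chset gT) :
  (forall P, pr P -> pr' P) -> fm f pr c \subset fm f pr' c.
Proof.
move=> h; apply/subsetP=> X /fm_memP[P Pc [hP ->]]; exact: fm_mem (h _ hP).
Qed.

Lemma lo_big (gT : finGroupType) (G : {group gT}) p m (c : chset gT) :
  #|G| < m -> c \in chains (Sp G p) -> lo m c = c.
Proof.
move=> hm /chainE[_ cS _]; rewrite /lo /fm imset_id; apply/setP=> P; rewrite inE.
case Pc: (P \in c) => //=.
have := subsetP cS P Pc; rewrite inE => /andP[/andP[sPG _] _].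
exact: leq_trans (subset_leq_card sPG) (ltnW hm).
Qed.

Lemma hi_big (gT : finGroupType) (G : {group gT}) p m (c : chset gT) :
  #|G| < m -> c \in chains (Sp G p) -> hi G p m c = set0.
Proof.
move=> hm /chainE[_ cS _]; apply/setP=> X; rewrite inE; apply/negP.
case/fm_memP=> P Pc [hP _].
have := subsetP cS P Pc; rewrite inE => /andP[/andP[sPG _] _].
have := leq_trans hm (leq_trans hP (subset_leq_card sPG)); by rewrite ltnn.
Qed.

From Stdlib Require Import RIneq Rbasic_fun Lra.
Section Topo.
Variables (T : finType) (le : rel T) (X : {set T}).

Definition hom (f g : T -> T) : Prop :=
  exists H : T -> R -> T,
    (forall x t, x \in X -> unit_interval t -> H x t \in X) /\
    (forall x, x \in X -> H x R0 = f x /\ H x R1 = g x) /\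
    homotopy_continuous le X H.

Definition monoX (f : T -> T) := forall x y, x \in X -> y \in X -> le x y -> le (f x) (f y).
Definition mapsX (f : T -> T) := forall x, x \in X -> f x \in X.

Lemma down_pre f U : mapsX f -> monoX f -> down_open le X U ->
  down_open le X [set y in X | f y \in U].
Proof.
move=> mf monf [_ dU]; split; first by apply/subsetP=> y; rewrite inE => /andP[].
move=> x y; rewrite !inE => /andP[xX fxU] yX lyx; rewrite yX /=.
exact: (dU (f x) (f y) fxU (mf y yX) (monf y x yX xX lyx)).
Qed.

Lemma hom_le f g : mapsX f -> mapsX g -> monoX f -> monoX g ->
  (forall x, x \in X -> le (f x) (g x)) -> hom f g.
Proof.
move=> mf mg monf mong fg.
exists (fun x t => if Rlt_le_dec t R1 then f x else g x); split; [|split].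
- by move=> x t xX _; destruct (Rlt_le_dec _ _) as [h|h]; [apply: mf|apply: mg].
- move=> x xX; split; destruct (Rlt_le_dec _ _) as [h|h]; try done; lra.
- move=> U dU x t xX ut; destruct (Rlt_le_dec _ _) as [ht|ht] => HU.
  + exists [set y in X | f y \in U]; split; first exact: down_pre.
    split; first by rewrite inE xX.
    exists (R1 - t)%R; split; first lra.
    move=> y s; rewrite inE => /andP[yX fyU] us /Rabs_def2 [h1 h2].
    destruct (Rlt_le_dec _ _) as [hh|hh] => //; lra.
  + exists [set y in X | g y \in U]; split; first exact: down_pre.
    split; first by rewrite inE xX.
    exists R1; split; first lra.
    move=> y s; rewrite inE => /andP[yX gyU] us _.
    destruct (Rlt_le_dec _ _) as [hh|hh] => //.
    by case: dU => _ dU; apply: (dU (g y)) => //; [apply: mf| apply: fg].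
Qed.

Lemma hom_sym f g : hom f g -> hom g f.
Proof.
move=> [H [HX [H01 Hc]]].
exists (fun x t => H x (R1 - t)%R); split; [|split].
- move=> x t xX [h1 h2]; apply: HX => //; split; lra.
- move=> x xX; have [e0 e1] := H01 x xX.
  replace (R1 - R0)%R with R1 by lra; replace (R1 - R1)%R with R0 by lra.
  by split.
- move=> U dU x t xX [h1 h2] HU.
  have [|V [dV [xV [e [e0 He]]]]] := Hc U dU x (R1 - t)%R xX _ HU.
    split; lra.
  exists V; split=> //; split=> //; exists e; split=> //.
  move=> y s yV [s1 s2] /Rabs_def2 [k1 k2]; apply: He => //.
    split; lra.
  apply: Rabs_def1; lra.
Qed.

Lemma hom_trans f g h : hom f g -> hom g h -> hom f h.
Proof.
move=> [H1 [HX1 [H011 Hc1]]] [H2 [HX2 [H012 Hc2]]].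
exists (fun x t => if Rle_lt_dec t (/2)%R then H1 x (2 * t)%R else H2 x (2 * t - 1)%R).
split; [|split].
- move=> x t xX [h1 h2]; destruct (Rle_lt_dec _ _) as [ht|ht].
    apply: HX1 => //; split; lra.
  apply: HX2 => //; split; lra.
- move=> x xX; have [a1 b1] := H011 x xX; have [a2 b2] := H012 x xX.
  split; destruct (Rle_lt_dec _ _) as [ht|ht]; try lra.
    by replace (2 * R0)%R with R0 by lra.
  by replace (2 * R1 - 1)%R with R1 by lra.
- move=> U dU x t xX [t1 t2].
  have [[lt|eq]|gt] := total_order_T t (/2)%R.
  + destruct (Rle_lt_dec _ _) as [ht|ht]; last lra.
    move=> HU; have [|V [dV [xV [e [e0 He]]]]] := Hc1 U dU x (2 * t)%R xX _ HU.
      split; lra.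
    exists V; split=> //; split=> //; exists (Rmin (e / 2) (/2 - t))%R; split.
      apply: Rmin_glb_lt; lra.
    move=> y s yV [s1 s2] /Rabs_def2 [k1 k2].
    have m1 := Rmin_l (e / 2) (/2 - t); have m2 := Rmin_r (e / 2) (/2 - t).
    destruct (Rle_lt_dec _ _) as [hs|hs]; last lra.
    apply: He => //; first (split; lra).
    apply: Rabs_def1; lra.
  + destruct (Rle_lt_dec _ _) as [ht|ht]; last lra.
    have [a1 b1] := H011 x xX; have [a2 b2] := H012 x xX.
    replace (2 * t)%R with R1 by lra.
    move=> HU.
    have [|V1 [dV1 [xV1 [e1 [e10 He1]]]]] := Hc1 U dU x R1 xX _ HU.
      split; lra.
    have HU2 : H2 x R0 \in U by rewrite a2 -b1.
    have [|V2 [dV2 [xV2 [e2 [e20 He2]]]]] := Hc2 U dU x R0 xX _ HU2.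
      split; lra.
    exists (V1 :&: V2); split.
      case: dV1 => sV1 d1; case: dV2 => sV2 d2; split.
        by apply: subset_trans sV1; apply: subsetIl.
      move=> z w; rewrite !inE => /andP[z1 z2] wX lwz.
      by rewrite (d1 z w) // (d2 z w).
    split; first by rewrite inE xV1 xV2.
    exists (Rmin e1 e2 / 2)%R; split.
      have := Rmin_glb_lt e1 e2 0 e10 e20; lra.
    have m1 := Rmin_l e1 e2; have m2 := Rmin_r e1 e2.
    move=> y s; rewrite inE => /andP[yV1 yV2] [s1 s2] /Rabs_def2 [k1 k2].
    destruct (Rle_lt_dec _ _) as [hs|hs].
      apply: He1 => //; first (split; lra).
      apply: Rabs_def1; lra.
    apply: He2 => //; first (split; lra).
    apply: Rabs_def1; lra.
  + destruct (Rle_lt_dec _ _) as [ht|ht]; first lra.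
    move=> HU; have [|V [dV [xV [e [e0 He]]]]] := Hc2 U dU x (2 * t - 1)%R xX _ HU.
      split; lra.
    exists V; split=> //; split=> //; exists (Rmin (e / 2) (t - /2))%R; split.
      apply: Rmin_glb_lt; lra.
    move=> y s yV [s1 s2] /Rabs_def2 [k1 k2].
    have m1 := Rmin_l (e / 2) (t - /2); have m2 := Rmin_r (e / 2) (t - /2).
    destruct (Rle_lt_dec _ _) as [hs|hs]; first lra.
    apply: He => //; first (split; lra).
    apply: Rabs_def1; lra.
Qed.

Lemma hom_eql f f' g : (forall x, x \in X -> f x = f' x) -> hom f g -> hom f' g.
Proof.
move=> e [H [HX [H01 Hc]]]; exists H; split=> //; split=> // x xX.
by have [a b] := H01 x xX; rewrite -e.
Qed.

Lemma contractible_hom x0 : x0 \in X -> hom (fun x => x) (fun _ => x0) -> contractible le X.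
Proof.
move=> x0X [H [HX [H01 Hc]]]; exists x0; split=> //; exists H; split=> //.
Qed.

End Topo.

Lemma hom_lift (gT : finGroupType) (G : {group gT}) (S : {set {group gT}})
  (F F' : chset gT -> chset gT) :
  equivF G F -> equivF G F' -> monoF F -> monoF F' ->
  (forall c, c \in chains S -> F c \in chains S) ->
  (forall c, c \in chains S -> F' c \in chains S) ->
  (forall c, F c \subset F' c) ->
  hom (@orbit_le gT) (orbit_poset G S) (lift F) (lift F').
Proof.
move=> eF eF' mF mF' cF cF' sF; apply: hom_le.
- exact: lift_maps.
- exact: lift_maps.
- by move=> x y _ _; apply: lift_mono.
- by move=> x y _ _; apply: lift_mono.
- exact: lift_le.
Qed.

Theorem proposition5p4 (gT : finGroupType) (G : {group gT}) (p : nat) :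
  prime p -> p %| #|G| -> ('O_p(G) != 1)%g ->
  contractible (@orbit_le gT) (orbit_poset G (Sp G p)) /\
  contractible (@orbit_le gT) (orbit_poset G (Bp G p)).
Proof.
move=> _ _ N1.
pose x0 := chain_orbit G [set ('O_p(G))%G].
split.
- have x0X : x0 \in orbit_poset G (Sp G p).
    by apply: imset_f; exact: (Kc_chain set0 (N_Sp N1)).
  apply: (contractible_hom x0X).
  pose m := #|G|.+1.
  have h1 : hom (@orbit_le gT) (orbit_poset G (Sp G p)) (fun O => O) (lift (Gab G p m m)).
    apply: (hom_eql (f := lift (Gab G p m m))).
      move=> O /imsetP[c cC ->]; rewrite lift_orbit; last exact: Gab_equiv.
      by rewrite /Gab (lo_big (G:=G) (p:=p)) // hi_big // setU0.
    apply: hom_lift => //; try exact: Gab_equiv; try exact: Gab_mono;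
      by move=> c; apply: Gab_chain.
  have h2 : forall n, hom (@orbit_le gT) (orbit_poset G (Sp G p))
      (lift (Gab G p 0 0)) (lift (Gab G p n n)).
    elim=> [|n IH].
      apply: hom_lift => //; try exact: Gab_equiv; try exact: Gab_mono;
        by move=> c; apply: Gab_chain.
    apply: (hom_trans IH); apply: (hom_trans (g := lift (Gab G p n n.+1))).
      apply: hom_sym; apply: hom_lift; try exact: Gab_equiv; try exact: Gab_mono.
      - by move=> c; apply: Gab_chain.
      - by move=> c; apply: Gab_chain.
      - move=> c; apply: setUS; apply: fm_subpr => P; exact: ltnW.
    apply: hom_lift; try exact: Gab_equiv; try exact: Gab_mono.
    - by move=> c; apply: Gab_chain.
    - by move=> c; apply: Gab_chain.
    - move=> c; apply: setSU; apply: fm_subpr => P; exact: leqW.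
  have h3 : hom (@orbit_le gT) (orbit_poset G (Sp G p)) (lift (Gab G p 0 0)) (lift (psi G p)).
    apply: hom_lift; try exact: Gab_equiv; try exact: Gab_mono; try exact: psi_equiv;
      try exact: psi_mono.
    - by move=> c; apply: Gab_chain.
    - by move=> c; apply: psi_chain.
    - move=> c; apply/subsetP=> X /setUP[/fm_memP[P _ [hP _]]|hX].
        by rewrite leqNgt cardG_gt0 in hP.
      by rewrite inE hX.
  have h4 : hom (@orbit_le gT) (orbit_poset G (Sp G p)) (lift (Kc G p)) (lift (psi G p)).
    apply: hom_lift; try exact: Kc_equiv; try exact: Kc_mono; try exact: psi_equiv;
      try exact: psi_mono.
    - by move=> c _; apply: Kc_chain; exact: N_Sp N1.
    - by move=> c; apply: psi_chain.
    - by move=> c; rewrite sub1set !inE eqxx orbT.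
  have h5 : hom (@orbit_le gT) (orbit_poset G (Sp G p)) (lift (Kc G p)) (fun _ => x0).
    apply: hom_sym; apply: (hom_eql (f := lift (Kc G p))).
      by move=> O /imsetP[c cC ->]; rewrite lift_orbit //; exact: Kc_equiv.
    apply: hom_lift; try exact: Kc_equiv; try exact: Kc_mono.
    - by move=> c _; apply: Kc_chain; exact: N_Sp N1.
    - by move=> c _; apply: Kc_chain; exact: N_Sp N1.
    - by move=> c.
  apply: (hom_trans h1); apply: (hom_trans (hom_sym (h2 m))).
  apply: (hom_trans h3); apply: (hom_trans (hom_sym h4)); exact: h5.
- have x0X : x0 \in orbit_poset G (Bp G p).
    by apply: imset_f; exact: (Kc_chain set0 (N_Bp N1)).
  apply: (contractible_hom x0X).
  have h1 : hom (@orbit_le gT) (orbit_poset G (Bp G p)) (fun O => O) (lift (Bf G p)).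
    apply: hom_le => //.
    - by move=> O OX; apply: lift_maps => //; [exact: Bf_equiv | move=> c; apply: Bf_chain].
    - by move=> x y _ _; apply: lift_mono; apply: Bf_mono.
    - by apply: id_le => c; apply: subsetUl.
  have h4 : hom (@orbit_le gT) (orbit_poset G (Bp G p)) (lift (Kc G p)) (lift (Bf G p)).
    apply: hom_lift; try exact: Kc_equiv; try exact: Kc_mono; try exact: Bf_equiv;
      try exact: Bf_mono.
    - by move=> c _; apply: Kc_chain; exact: N_Bp N1.
    - by move=> c; apply: Bf_chain.
    - by move=> c; rewrite sub1set !inE eqxx orbT.
  have h5 : hom (@orbit_le gT) (orbit_poset G (Bp G p)) (lift (Kc G p)) (fun _ => x0).
    apply: hom_sym; apply: (hom_eql (f := lift (Kc G p))).
      by move=> O /imsetP[c cC ->]; rewrite lift_orbit //; exact: Kc_equiv.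
    apply: hom_lift; try exact: Kc_equiv; try exact: Kc_mono.
    - by move=> c _; apply: Kc_chain; exact: N_Bp N1.
    - by move=> c _; apply: Kc_chain; exact: N_Bp N1.
    - by move=> c.
  apply: (hom_trans h1); apply: (hom_trans (hom_sym h4)); exact: h5.
Qed.
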